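(* For every $\delta>0$, the function $\alpha\mapsto L(\alpha;\delta)$ is strictly decreasing on $(0,1)$.
   Context: For $s\ge0$ let $\phi_1(s)=\int_0^{\pi/2}\frac{\sin^2\theta}{(\sin^2\theta+s^2)^{1/2}}d\theta$ (strictly decreasing, $\phi_1(0)=1$, $\phi_1(s)\to0$ as $s\to\infty$, with inverse $\phi_1^{-1}:(0,1]\to[0,\infty)$) and $\phi_2(s)=\int_0^{\pi/2}\frac{2\sin^2\theta+s^2}{(\sin^2\theta+s^2)^{1/2}}d\theta$. For $\alpha\in(0,1)$ and $\delta>0$ define $L(\alpha;\delta)=\frac4\delta\Big(1-\frac{\phi_2^2(\phi_1^{-1}(\alpha))}{4[1+(\phi_1^{-1}(\alpha))^2]}\Big)$. *)

(* Defs.v *)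
From Stdlib Require Import Reals Lra ClassicalEpsilon.
Open Scope R_scope.

(* Riemann integral of f over [a,b] (0 if f is not Riemann integrable there);
   RiemannInt does not depend on the integrability proof (RiemannInt_P5). *)
Definition Rint (f : R -> R) (a b : R) : R :=
  epsilon (inhabits 0)
    (fun I => exists pr : Riemann_integrable f a b, RiemannInt pr = I).

Definition phi1 (s : R) : R :=
  Rint (fun t => (sin t)^2 / sqrt ((sin t)^2 + s^2)) 0 (PI/2).

Definition phi2 (s : R) : R :=
  Rint (fun t => (2 * (sin t)^2 + s^2) / sqrt ((sin t)^2 + s^2)) 0 (PI/2).

(* phi_1^{-1} : (0,1] -> [0,oo): the s >= 0 with phi1 s = alpha
   (unique since phi1 is strictly decreasing on [0,oo)). *)
Definition phi1_inv (alpha : R) : R :=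
  epsilon (inhabits 0) (fun s => 0 <= s /\ phi1 s = alpha).

Definition L (alpha delta : R) : R :=
  let s := phi1_inv alpha in
  4 / delta * (1 - (phi2 s)^2 / (4 * (1 + s^2))).

(* Main.v *)
Require Import Defs.
From Stdlib Require Import Reals Lra ClassicalEpsilon.
From Coquelicot Require Import Coquelicot.
Open Scope R_scope.


Lemma c_mul {U : UniformSpace} (f g : U -> R) x : continuous f x -> continuous g x -> continuous (fun y => f y * g y) x.
Proof. intros; now apply (continuous_mult f g). Qed.
Lemma c_add {U : UniformSpace} (f g : U -> R) x : continuous f x -> continuous g x -> continuous (fun y => f y + g y) x.
Proof. intros; now apply (continuous_plus f g). Qed.
Lemma c_inv {U : UniformSpace} (f : U -> R) x : continuous f x -> f x <> 0 -> continuous (fun y => / f y) x.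
Proof. intros; apply (continuous_comp f (fun z => / z)); auto. now apply continuous_Rinv. Qed.
Lemma c_sqrt {U : UniformSpace} (f : U -> R) x : continuous f x -> continuous (fun y => sqrt (f y)) x.
Proof. intros; apply (continuous_comp f sqrt); auto. apply continuous_sqrt. Qed.
Lemma c_sin {U : UniformSpace} (f : U -> R) x : continuous f x -> continuous (fun y => sin (f y)) x.
Proof. intros; apply (continuous_comp f sin); auto. apply continuous_sin. Qed.
Lemma c_cos {U : UniformSpace} (f : U -> R) x : continuous f x -> continuous (fun y => cos (f y)) x.
Proof. intros; apply (continuous_comp f cos); auto. apply continuous_cos. Qed.
Lemma c_div {U : UniformSpace} (f g : U -> R) x : continuous f x -> continuous g x -> g x <> 0 -> continuous (fun y => f y / g y) x.
Proof. intros; unfold Rdiv; apply c_mul; auto; now apply c_inv. Qed.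
Lemma c_pow2 {U : UniformSpace} (f : U -> R) x : continuous f x -> continuous (fun y => f y ^ 2) x.
Proof. intros; apply (continuous_ext (fun y => f y * f y) (fun y => f y ^ 2)). intros; simpl; ring. now apply c_mul. Qed.
Lemma c_cst {U : UniformSpace} (c : R) x : continuous (fun _ : U => c) x.
Proof. apply continuous_const. Qed.


Lemma loc_pos (x : R) : 0 < x -> locally x (fun y => 0 < y).
Proof.
  intros Hx. exists (mkposreal (x/2) ltac:(lra)). intros y Hy.
  unfold ball in Hy; simpl in Hy; unfold AbsRing_ball, abs, minus, plus, opp in Hy; simpl in Hy.
  apply Rabs_lt_between in Hy; lra.
Qed.

Lemma loc_pos2 (x t : R) : 0 < x -> locally (x, t) (fun p : R * R => 0 < fst p).
Proof.
  intros Hx. exists (mkposreal (x/2) ltac:(lra)). intros [y z] [Hy _].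
  unfold ball in Hy; simpl in Hy; unfold AbsRing_ball, abs, minus, plus, opp in Hy; simpl in Hy.
  apply Rabs_lt_between in Hy; simpl; lra.
Qed.

Lemma cont_slice (f : R -> R -> R) s t :
  continuous (fun p : R * R => f (fst p) (snd p)) (s, t) ->
  continuous (fun u => f s u) t.
Proof.
  intros H. apply (continuous_comp_2 (fun _ => s) (fun u => u) f).
  apply continuous_const. apply continuous_id. exact H.
Qed.

Lemma param_der (f df : R -> R -> R) (x : R) :
  0 < x ->
  (forall s t, 0 < s -> is_derive (fun z => f z t) s (df s t)) ->
  (forall s t, 0 < s -> continuous (fun p : R * R => f (fst p) (snd p)) (s, t)) ->
  (forall s t, 0 < s -> continuous (fun p : R * R => df (fst p) (snd p)) (s, t)) ->
  is_derive (fun s => RInt (f s) 0 (PI/2)) x (RInt (df x) 0 (PI/2)).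
Proof.
  intros Hx Hd Hc Hdc.
  assert (E : RInt (df x) 0 (PI/2) = RInt (fun t => Derive (fun u => f u t) x) 0 (PI/2)).
  { apply RInt_ext. intros t _. symmetry. apply is_derive_unique. now apply Hd. }
  rewrite E. apply (is_derive_RInt_param f 0 (PI/2) x).
  - apply (filter_imp (fun y => 0 < y)). 2: now apply loc_pos.
    intros y Hy t _. eexists. now apply Hd.
  - intros t _. apply continuity_2d_pt_filterlim.
    change (continuous (fun p : R * R => Derive (fun z => f z (snd p)) (fst p)) (x, t)).
    apply (continuous_ext_loc _ (fun p : R * R => df (fst p) (snd p))).
    + apply (filter_imp (fun p : R * R => 0 < fst p)). 2: now apply loc_pos2.
      intros p Hp. symmetry. apply is_derive_unique. now apply Hd.
    + now apply Hdc.
  - apply (filter_imp (fun y => 0 < y)). 2: now apply loc_pos.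
    intros y Hy. apply (@ex_RInt_continuous R_CompleteNormedModule). intros z _. apply (cont_slice f). now apply Hc.
Qed.


Definition f1 (s t : R) := (sin t)^2 / sqrt ((sin t)^2 + s^2).
Definition f2 (s t : R) := (2 * (sin t)^2 + s^2) / sqrt ((sin t)^2 + s^2).
Definition df1 (s t : R) := - s * (sin t)^2 / (((sin t)^2 + s^2) * sqrt ((sin t)^2 + s^2)).
Definition df2 (s t : R) := s^3 / (((sin t)^2 + s^2) * sqrt ((sin t)^2 + s^2)).

Lemma w_pos s t : 0 < s -> 0 < (sin t)^2 + s^2.
Proof. intros. nra. Qed.

Lemma sq_pos s t : 0 < s -> 0 < sqrt ((sin t)^2 + s^2).
Proof. intros. apply sqrt_lt_R0. now apply w_pos. Qed.

Ltac wfix s t :=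
  replace (sin t * (sin t * 1) + s * (s * 1)) with ((sin t)^2 + s^2) by ring.

Ltac sqf s t :=
  let q := fresh "q" in
  let Hq := fresh "Hq" in
  assert (Hq : (sin t)^2 + s^2 = sqrt ((sin t)^2 + s^2) * sqrt ((sin t)^2 + s^2))
    by (rewrite sqrt_sqrt; nra);
  set (q := sqrt ((sin t)^2 + s^2)) in *;
  try rewrite Hq.

Lemma d_f1 s t : 0 < s -> is_derive (fun z => f1 z t) s (df1 s t).
Proof.
  intros Hs. unfold f1, df1. pose proof (w_pos s t Hs). pose proof (sq_pos s t Hs).
  auto_derive; wfix s t.
  - split; [lra|split; [lra|auto]].
  - sqf s t. field. lra.
Qed.

Lemma d_f2 s t : 0 < s -> is_derive (fun z => f2 z t) s (df2 s t).
Proof.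
  intros Hs. unfold f2, df2. pose proof (w_pos s t Hs). pose proof (sq_pos s t Hs).
  auto_derive; wfix s t.
  - split; [lra|split; [lra|auto]].
  - sqf s t. clearbody q. replace (sin t * (sin t * 1)) with (q*q - s^2) by (rewrite <- Hq; ring). field. lra.
Qed.

Lemma cW s t : continuous (fun p : R * R => (sin (snd p))^2 + (fst p)^2) (s, t).
Proof.
  apply c_add; apply c_pow2. apply c_sin. apply continuous_snd. apply continuous_fst.
Qed.

Lemma cS s t : 0 < s -> continuous (fun p : R * R => sqrt ((sin (snd p))^2 + (fst p)^2)) (s, t).
Proof. intros. apply c_sqrt. apply cW. Qed.

Lemma cf1 s t : 0 < s -> continuous (fun p : R * R => f1 (fst p) (snd p)) (s, t).
Proof.
  intros Hs. unfold f1. apply c_div. apply c_pow2, c_sin, continuous_snd.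
  now apply cS. exact (Rgt_not_eq _ _ (sq_pos s t Hs)).
Qed.

Lemma cf2 s t : 0 < s -> continuous (fun p : R * R => f2 (fst p) (snd p)) (s, t).
Proof.
  intros Hs. unfold f2. apply c_div. apply c_add. apply c_mul. apply c_cst.
  apply c_pow2, c_sin, continuous_snd. apply c_pow2, continuous_fst.
  now apply cS. exact (Rgt_not_eq _ _ (sq_pos s t Hs)).
Qed.

Lemma cdf1 s t : 0 < s -> continuous (fun p : R * R => df1 (fst p) (snd p)) (s, t).
Proof.
  intros Hs. unfold df1. apply c_div. apply c_mul.
  apply (continuous_ext (fun p : R * R => -1 * fst p)). intros; simpl; ring.
  apply c_mul. apply c_cst. apply continuous_fst.
  apply c_pow2, c_sin, continuous_snd.
  apply c_mul. apply cW. now apply cS. exact (Rgt_not_eq _ _ (Rmult_lt_0_compat _ _ (w_pos s t Hs) (sq_pos s t Hs))).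
Qed.

Lemma cdf2 s t : 0 < s -> continuous (fun p : R * R => df2 (fst p) (snd p)) (s, t).
Proof.
  intros Hs. unfold df2. apply c_div.
  apply (continuous_ext (fun p : R * R => fst p * (fst p)^2)). intros; simpl; ring.
  apply c_mul. apply continuous_fst. apply c_pow2, continuous_fst.
  apply c_mul. apply cW. now apply cS. exact (Rgt_not_eq _ _ (Rmult_lt_0_compat _ _ (w_pos s t Hs) (sq_pos s t Hs))).
Qed.

Lemma phi1_der x : 0 < x -> is_derive (fun s => RInt (f1 s) 0 (PI/2)) x (RInt (df1 x) 0 (PI/2)).
Proof. intros; apply param_der; auto using d_f1, cf1, cdf1. Qed.
Lemma phi2_der x : 0 < x -> is_derive (fun s => RInt (f2 s) 0 (PI/2)) x (RInt (df2 x) 0 (PI/2)).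
Proof. intros; apply param_der; auto using d_f2, cf2, cdf2. Qed.


Definition hh (s t : R) := (1 + s^2) * df2 s t - s * sqrt ((sin t)^2 + s^2).
Definition GG (s t : R) := s * (sin t * cos t) / sqrt ((sin t)^2 + s^2).

Lemma d_GG s t : 0 < s -> is_derive (GG s) t (hh s t).
Proof.
  intros Hs. unfold GG, hh, df2. pose proof (w_pos s t Hs). pose proof (sq_pos s t Hs).
  auto_derive; wfix s t.
  - split; [lra|split; [lra|auto]].
  - pose proof (sin2_cos2 t) as Hc. unfold Rsqr in Hc.
    sqf s t. clearbody q.
    field_simplify_eq; [|lra].
    assert (Hc2 : cos t ^ 2 = 1 - sin t ^ 2) by (simpl; lra).
    assert (Hs2 : sin t ^ 2 = q ^ 2 - s ^ 2) by (simpl; simpl in Hq; lra).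
    rewrite Hc2, Hs2. ring.
Qed.

Definition sw (s t : R) := sqrt ((sin t)^2 + s^2).

Lemma cslice_sw s t : 0 < s -> continuous (sw s) t.
Proof. intros Hs. apply (cont_slice sw s t). now apply cS. Qed.
Lemma cslice_f1 s t : 0 < s -> continuous (f1 s) t.
Proof. intros Hs. apply (cont_slice f1 s t). now apply cf1. Qed.
Lemma cslice_f2 s t : 0 < s -> continuous (f2 s) t.
Proof. intros Hs. apply (cont_slice f2 s t). now apply cf2. Qed.
Lemma cslice_df2 s t : 0 < s -> continuous (df2 s) t.
Proof. intros Hs. apply (cont_slice df2 s t). now apply cdf2. Qed.

Lemma exR (f : R -> R) : (forall t, continuous f t) -> ex_RInt f 0 (PI/2).
Proof. intros H. apply (@ex_RInt_continuous R_CompleteNormedModule). intros; apply H. Qed.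

Lemma RInt_hh s : 0 < s -> RInt (hh s) 0 (PI/2) = 0.
Proof.
  intros Hs.
  assert (H : is_RInt (hh s) 0 (PI/2) (minus (GG s (PI/2)) (GG s 0))).
  { apply (is_RInt_derive (GG s) (hh s) 0 (PI/2)).
    - intros; now apply d_GG.
    - intros x _. apply (continuous_ext (fun u => (1 + s^2) * df2 s u + (-s) * sw s u)).
      intros; unfold hh, sw; simpl; ring.
      apply c_add; apply c_mul; try apply c_cst. now apply cslice_df2. now apply cslice_sw. }
  apply (is_RInt_unique (V := R_CompleteNormedModule)) in H. rewrite H.
  unfold GG, minus, plus, opp; simpl. rewrite cos_PI2, sin_0. unfold Rdiv; ring.
Qed.


Lemma mR (a b c d : R) : minus (scal a b) (scal c d) = a*b - c*d.
Proof. reflexivity. Qed.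

Lemma key s : 0 < s ->
  (1 + s^2) * RInt (df2 s) 0 (PI/2) = s * RInt (sw s) 0 (PI/2).
Proof.
  intros Hs. pose proof (RInt_hh s Hs) as H.
  assert (H2 : is_RInt (V := R_CompleteNormedModule) (hh s) 0 (PI/2)
     (minus (scal (1 + s^2) (RInt (df2 s) 0 (PI/2))) (scal s (RInt (sw s) 0 (PI/2))))).
  { apply (is_RInt_ext (fun t => minus (scal (1+s^2) (df2 s t)) (scal s (sw s t)))).
    - intros x _. rewrite mR. reflexivity.
    - apply (is_RInt_minus (V := R_NormedModule) (fun t => scal (1+s^2) (df2 s t)) (fun t => scal s (sw s t))).
      + apply (is_RInt_scal (V := R_NormedModule) (df2 s)).
        apply (RInt_correct (V := R_CompleteNormedModule) (df2 s)). apply exR; intros; now apply cslice_df2.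
      + apply (is_RInt_scal (V := R_NormedModule) (sw s)).
        apply (RInt_correct (V := R_CompleteNormedModule) (sw s)). apply exR; intros; now apply cslice_sw. }
  apply (is_RInt_unique (V := R_CompleteNormedModule)) in H2. rewrite H2, mR in H. lra.
Qed.

Lemma pR (a b : R) : plus a b = a + b.
Proof. reflexivity. Qed.

Lemma split2 s : 0 < s -> RInt (f2 s) 0 (PI/2) = RInt (sw s) 0 (PI/2) + RInt (f1 s) 0 (PI/2).
Proof.
  intros Hs.
  assert (H : is_RInt (V := R_NormedModule) (f2 s) 0 (PI/2) (plus (RInt (sw s) 0 (PI/2)) (RInt (f1 s) 0 (PI/2)))).
  { apply (is_RInt_ext (fun t => plus (sw s t) (f1 s t))).
    - intros t _. rewrite pR. unfold f2, sw, f1. match goal with |- ?a = ?b => change (@eq R a b) end. pose proof (sq_pos s t Hs).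
      sqf s t. clearbody q. replace (2 * sin t ^ 2 + s ^ 2) with (q*q + sin t ^ 2) by (rewrite <- Hq; ring). field. lra.
    - apply (is_RInt_plus (V := R_NormedModule) (sw s) (f1 s)).
      + apply (RInt_correct (V := R_CompleteNormedModule) (sw s)). apply exR; intros; now apply cslice_sw.
      + apply (RInt_correct (V := R_CompleteNormedModule) (f1 s)). apply exR; intros; now apply cslice_f1. }
  apply (is_RInt_unique (V := R_CompleteNormedModule)) in H. rewrite H, pR. reflexivity.
Qed.


Ltac toR := match goal with |- ?a = ?b => change (@eq R a b) end.

Lemma Rint_RInt (f : R -> R) : ex_RInt f 0 (PI/2) -> Rint f 0 (PI/2) = RInt f 0 (PI/2).
Proof.
  intros H. unfold Rint.
  assert (Ex : exists I, exists pr : Riemann_integrable f 0 (PI/2), RiemannInt pr = I).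
  { exists (RiemannInt (ex_RInt_Reals_0 _ _ _ H)). eexists; reflexivity. }
  destruct (epsilon_spec (inhabits 0) _ Ex) as [pr Hpr].
  rewrite <- Hpr. symmetry. apply RInt_Reals.
Qed.

Lemma phi1_eq s : 0 < s -> phi1 s = RInt (f1 s) 0 (PI/2).
Proof. intros Hs. apply Rint_RInt. apply exR; intros; now apply cslice_f1. Qed.
Lemma phi2_eq s : 0 < s -> phi2 s = RInt (f2 s) 0 (PI/2).
Proof. intros Hs. apply Rint_RInt. apply exR; intros; now apply cslice_f2. Qed.

Lemma PI2_pos : 0 < PI/2.
Proof. pose proof PI_RGT_0. lra. Qed.

Lemma sin_pos_in t : 0 < t < PI/2 -> 0 < sin t.
Proof. intros. apply sin_gt_0; pose proof PI_RGT_0; lra. Qed.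

Lemma phi1_0 : phi1 0 = 1.
Proof.
  assert (Hs : is_RInt (V := R_CompleteNormedModule) sin 0 (PI/2) 1).
  { replace 1 with (minus ((fun t => - cos t) (PI/2)) ((fun t => - cos t) 0)).
    2:{ rewrite cos_PI2, cos_0. unfold minus, plus, opp; simpl. ring. }
    apply (is_RInt_derive (fun t => - cos t) sin).
    - intros x _. auto_derive; auto. ring.
    - intros x _. apply continuous_sin. }
  assert (Hx : ex_RInt (fun t => (sin t)^2 / sqrt ((sin t)^2 + 0^2)) 0 (PI/2)).
  { apply (ex_RInt_ext sin). 2:{ eexists; exact Hs. }
    intros t Ht. toR. rewrite Rmin_left, Rmax_right in Ht by (pose proof PI2_pos; lra).
    pose proof (sin_pos_in t Ht). replace ((sin t)^2 + 0^2) with ((sin t)^2) by ring.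
    rewrite sqrt_pow2 by lra. field. lra. }
  unfold phi1. rewrite Rint_RInt by exact Hx.
  rewrite <- (is_RInt_unique (V := R_CompleteNormedModule) sin 0 (PI/2) 1 Hs).
  apply RInt_ext. intros t Ht. toR. rewrite Rmin_left, Rmax_right in Ht by (pose proof PI2_pos; lra).
  pose proof (sin_pos_in t Ht). replace ((sin t)^2 + 0^2) with ((sin t)^2) by ring.
  rewrite sqrt_pow2 by lra. field. lra.
Qed.

Lemma sin_ge0_in t : 0 <= t <= PI/2 -> 0 <= sin t.
Proof. intros. apply sin_ge_0; pose proof PI_RGT_0; lra. Qed.

Lemma sin_le1 t : sin t ^ 2 <= 1.
Proof. pose proof (sin2_cos2 t). unfold Rsqr in H. simpl. nra. Qed.

Lemma phi1_der' a : 0 < a -> is_derive phi1 a (RInt (df1 a) 0 (PI/2)).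
Proof.
  intros Ha. apply (is_derive_ext_loc (fun s => RInt (f1 s) 0 (PI/2))).
  - apply (filter_imp (fun y => 0 < y)). 2: now apply loc_pos.
    intros y Hy. symmetry. now apply phi1_eq.
  - now apply phi1_der.
Qed.

Lemma phi2_der' a : 0 < a -> is_derive phi2 a (RInt (df2 a) 0 (PI/2)).
Proof.
  intros Ha. apply (is_derive_ext_loc (fun s => RInt (f2 s) 0 (PI/2))).
  - apply (filter_imp (fun y => 0 < y)). 2: now apply loc_pos.
    intros y Hy. symmetry. now apply phi2_eq.
  - now apply phi2_der.
Qed.

Lemma phi1_cont a : 0 < a -> continuity_pt phi1 a.
Proof.
  intros Ha. apply continuity_pt_filterlim. apply (ex_derive_continuous (K := R_AbsRing) (V := R_NormedModule) phi1).
  eexists. now apply phi1_der'.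
Qed.

Lemma phi1_lower s : 0 < s -> 1 - s * (PI/2) <= phi1 s.
Proof.
  intros Hs. rewrite phi1_eq by auto.
  assert (Hi : is_RInt (V := R_CompleteNormedModule) (fun t => sin t - s) 0 (PI/2) (1 - s * (PI/2))).
  { replace (1 - s * (PI/2)) with (minus ((fun t => - cos t - s * t) (PI/2)) ((fun t => - cos t - s * t) 0)).
    2:{ rewrite cos_PI2, cos_0. unfold minus, plus, opp; simpl. ring. }
    apply (is_RInt_derive (fun t => - cos t - s * t) (fun t => sin t - s)).
    - intros x _. auto_derive; auto. ring.
    - intros x _. apply (continuous_ext (fun t => sin t + (-s))). intros; simpl; ring.
      apply c_add. apply continuous_sin. apply c_cst. }
  rewrite <- (is_RInt_unique (V := R_CompleteNormedModule) _ _ _ _ Hi).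
  apply RInt_le. pose proof PI2_pos; lra. eexists; exact Hi.
  apply exR; intros; now apply cslice_f1.
  intros t Ht. unfold f1. pose proof (sin_ge0_in t ltac:(lra)) as H0.
  pose proof (sq_pos s t Hs) as Hq.
  assert (Hq2 : sqrt (sin t ^ 2 + s ^ 2) * sqrt (sin t ^ 2 + s ^ 2) = sin t ^ 2 + s ^ 2)
    by (apply sqrt_sqrt; nra).
  assert (Hle : sqrt (sin t ^ 2 + s ^ 2) <= sin t + s).
  { apply Rsqr_incr_0_var. unfold Rsqr. rewrite Hq2. nra. lra. }
  set (q := sqrt (sin t ^ 2 + s ^ 2)) in *.
  apply (Rmult_le_reg_r q); auto. unfold Rdiv. rewrite Rmult_assoc, Rinv_l by lra.
  nra.
Qed.

Lemma phi1_upper s : 0 < s -> phi1 s <= (PI/2) / s.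
Proof.
  intros Hs. rewrite phi1_eq by auto.
  replace ((PI/2)/s) with (RInt (fun _ => / s) 0 (PI/2)).
  2:{ rewrite RInt_const. unfold scal; simpl; unfold mult; simpl. field. lra. }
  apply RInt_le. pose proof PI2_pos; lra.
  apply exR; intros; now apply cslice_f1.
  apply exR; intros; apply continuous_const.
  intros t Ht. unfold f1.
  pose proof (sq_pos s t Hs) as Hq. pose proof (sin_le1 t).
  assert (Hq2 : sqrt (sin t ^ 2 + s ^ 2) * sqrt (sin t ^ 2 + s ^ 2) = sin t ^ 2 + s ^ 2)
    by (apply sqrt_sqrt; nra).
  assert (Hge : s <= sqrt (sin t ^ 2 + s ^ 2)).
  { apply Rsqr_incr_0_var. unfold Rsqr. rewrite Hq2. nra. lra. }
  set (q := sqrt (sin t ^ 2 + s ^ 2)) in *.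
  apply (Rmult_le_reg_r (q * s)). nra. unfold Rdiv.
  replace (sin t ^ 2 * / q * (q * s)) with (sin t ^ 2 * s) by (field; lra).
  replace (/ s * (q * s)) with q by (field; lra).
  assert (0 <= sin t ^ 2) by nra. nra.
Qed.

Lemma phi1_exists al : 0 < al < 1 -> exists s, 0 < s /\ phi1 s = al.
Proof.
  intros Hal. pose proof PI_4. pose proof PI_RGT_0.
  set (e := (1 - al) / 4). set (S := 4 / al).
  assert (He : 0 < e) by (unfold e; lra).
  assert (HS : 0 < S) by (unfold S; apply Rdiv_lt_0_compat; lra).
  assert (HeS : e < S).
  { unfold e, S. apply Rlt_trans with 1. lra. apply (Rmult_lt_reg_r al). lra.
    field_simplify; lra. }
  assert (H1 : al < phi1 e).
  { pose proof (phi1_lower e He). assert (e * (PI/2) <= 2 * e) by nra. unfold e in *. lra. }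
  assert (H2 : phi1 S < al).
  { pose proof (phi1_upper S HS). assert (PI / 2 / S <= al / 2).
    { unfold S. apply (Rmult_le_reg_r (4 / al)). apply Rdiv_lt_0_compat; lra.
      field_simplify; try lra. }
    lra. }
  destruct (Ranalysis5.IVT_interv (fun s => al - phi1 s) e S) as [z [Hz Hz2]].
  - intros a Ha. apply continuity_pt_minus. apply continuity_pt_const. intros u v; reflexivity. apply phi1_cont. lra.
  - exact HeS.
  - simpl. lra.
  - simpl. lra.
  - exists z. split. lra. simpl in Hz2. lra.
Qed.

Lemma phi1_inv_spec al : 0 < al < 1 -> 0 < phi1_inv al /\ phi1 (phi1_inv al) = al.
Proof.
  intros Hal. destruct (phi1_exists al Hal) as [s [Hs Hp]].
  assert (Ex : exists s, 0 <= s /\ phi1 s = al) by (exists s; split; lra).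
  pose proof (epsilon_spec (inhabits 0) _ Ex) as [H1 H2].
  fold (phi1_inv al) in H1, H2. split; auto.
  destruct H1 as [H1|H1]; auto. rewrite <- H1 in H2. rewrite phi1_0 in H2. lra.
Qed.

Lemma phi1_mono x y : 0 < x -> x <= y -> phi1 y <= phi1 x.
Proof.
  intros Hx Hxy. rewrite !phi1_eq by lra.
  apply RInt_le. pose proof PI2_pos; lra.
  apply exR; intros; apply cslice_f1; lra.
  apply exR; intros; apply cslice_f1; lra.
  intros t _. unfold f1. pose proof (sq_pos x t Hx). 
  assert (sqrt (sin t ^ 2 + x ^ 2) <= sqrt (sin t ^ 2 + y ^ 2)).
  { apply sqrt_le_1_alt. nra. }
  unfold Rdiv. apply Rmult_le_compat_l. nra. apply Rinv_le_contravar; lra.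
Qed.

Lemma RInt0 : RInt (fun _ => 0) 0 (PI/2) = 0.
Proof. rewrite RInt_const. apply (scal_zero_r (K := R_AbsRing) (V := R_NormedModule)). Qed.

Lemma phi1_pos s : 0 < s -> 0 < phi1 s.
Proof.
  intros Hs. rewrite phi1_eq by auto. apply Rle_lt_trans with (RInt (fun _ => 0) 0 (PI/2)); [rewrite RInt0; lra|].
  apply RInt_lt. exact PI2_pos.
  intros; now apply cslice_f1. intros; apply continuous_const.
  intros t Ht. pose proof (sin_pos_in t Ht). unfold f1.
  apply Rdiv_lt_0_compat. nra. now apply sq_pos.
Qed.

Lemma sw_int_nonneg s : 0 < s -> 0 <= RInt (sw s) 0 (PI/2).
Proof.
  intros Hs. apply Rle_trans with (RInt (fun _ => 0) 0 (PI/2)); [rewrite RInt0; lra|]. apply RInt_le. pose proof PI2_pos; lra.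
  apply exR; intros; apply continuous_const.
  apply exR; intros; now apply cslice_sw.
  intros t _. unfold sw. apply sqrt_pos.
Qed.

Definition G (x : R) := phi2 x ^ 2 / (1 + x ^ 2).
Definition D2 (x : R) := RInt (df2 x) 0 (PI/2).
Definition dG (x : R) := (INR 2 * D2 x * phi2 x ^ 1 * (1 + x^2) - phi2 x ^ 2 * (2 * x)) / (1 + x^2) ^ 2.

Lemma G_der x : 0 < x -> is_derive G x (dG x).
Proof.
  intros Hx. unfold G, dG.
  apply (is_derive_div (fun y => phi2 y ^ 2) (fun y => 1 + y^2)).
  - apply (is_derive_pow phi2 2 x). now apply phi2_der'.
  - auto_derive; auto. ring.
  - nra.
Qed.

Lemma dG_neg x : 0 < x -> dG x < 0.
Proof.
  intros Hx. unfold dG, D2.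
  pose proof (key x Hx) as Hk. pose proof (split2 x Hx) as Hs.
  rewrite <- phi2_eq in Hs by auto. rewrite <- phi1_eq in Hs by auto.
  pose proof (phi1_pos x Hx). pose proof (sw_int_nonneg x Hx).
  set (Sw := RInt (sw x) 0 (PI/2)) in *. set (P2 := phi2 x) in *. set (P1 := phi1 x) in *.
  set (D := RInt (df2 x) 0 (PI/2)) in *.
  replace (INR 2 * D * P2 ^ 1 * (1 + x ^ 2) - P2 ^ 2 * (2 * x)) with (- (2 * x * P2 * P1)).
  2:{ replace (INR 2) with 2 by (simpl; ring). rewrite Hs.
      replace (2 * D * (Sw + P1) ^ 1 * (1 + x ^ 2)) with (2 * (Sw + P1) * ((1 + x^2) * D)) by ring.
      rewrite Hk. ring. }
  apply Rdiv_neg_pos. assert (0 < P2) by lra. assert (0 < 2 * x * P2 * P1) by (repeat apply Rmult_lt_0_compat; lra). lra.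
  apply pow_lt. nra.
Qed.

Lemma G_decr t s : 0 < t -> t < s -> G s < G t.
Proof.
  intros Ht Hts.
  destruct (MVT_gen G t s dG) as [c [Hc Hm]].
  - intros x Hx. rewrite Rmin_left, Rmax_right in Hx by lra. apply G_der. lra.
  - intros x Hx. rewrite Rmin_left, Rmax_right in Hx by lra.
    apply continuity_pt_filterlim. apply (ex_derive_continuous (K := R_AbsRing) (V := R_NormedModule) G).
    eexists. apply G_der. lra.
  - rewrite Rmin_left, Rmax_right in Hc by lra.
    pose proof (dG_neg c ltac:(lra)). nra.
Qed.

Theorem mainTheorem14 : forall delta : R, 0 < delta ->
  forall a b : R, 0 < a -> a < b -> b < 1 -> L b delta < L a delta.
Proof.
  intros delta Hd a b Ha Hab Hb.
  destruct (phi1_inv_spec a ltac:(lra)) as [Hsa Hpa].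
  destruct (phi1_inv_spec b ltac:(lra)) as [Hsb Hpb].
  assert (Hlt : phi1_inv b < phi1_inv a).
  { destruct (Rlt_or_le (phi1_inv b) (phi1_inv a)) as [H|H]; auto.
    pose proof (phi1_mono _ _ Hsa H). lra. }
  pose proof (G_decr _ _ Hsb Hlt) as HG. unfold G in HG.
  unfold L. cbv zeta.
  set (sa := phi1_inv a) in *. set (sb := phi1_inv b) in *.
  assert (Ea : phi2 sa ^ 2 / (4 * (1 + sa ^ 2)) = (phi2 sa ^ 2 / (1 + sa ^ 2)) / 4)
    by (field; nra).
  assert (Eb : phi2 sb ^ 2 / (4 * (1 + sb ^ 2)) = (phi2 sb ^ 2 / (1 + sb ^ 2)) / 4)
    by (field; nra).
  rewrite Ea, Eb. apply Rmult_lt_compat_l. apply Rdiv_lt_0_compat; lra. lra.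
Qed.
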